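(* Let $K$ be a field of characteristic zero and let $F^{(y)}:K[x]\to K[x,y]$ be a $K$-linear operator. Suppose $(p_n(x))_{n\ge0}$ and $(p'_n(x))_{n\ge0}$ are two sequences of polynomials in $K[x]$ with $\deg p_n=\deg p'_n=n$ such that for all $n\ge 0$ $$F^{(y)}p_n(x)=\sum_{k=0}^np_k(x)p_{n-k}(y)\quad\text{and}\quad F^{(y)}p'_n(x)=\sum_{k=0}^np'_k(x)p'_{n-k}(y).$$ Let $\epsilon,\epsilon':K[x]\to K$ be the linear maps defined by $\epsilon p_n(x)=\delta_{n0}$ and $\epsilon' p'_n(x)=\delta_{n0}$. Then $\epsilon=\epsilon'$. *)

(* Defs.v *)
From HB Require Import structures.
From mathcomp Require Export all_boot all_order all_algebra.
Set Implicit Arguments. Unset Strict Implicit. Unset Printing Implicit Defensive.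
Export GRing.Theory.
Local Open Scope ring_scope.

(* K[x,y] is modelled as {poly {poly K}}: polynomials in the outer variable y
   whose coefficients are polynomials in x. *)

Definition in_x (K : fieldType) (p : {poly K}) : {poly {poly K}} := p%:P.
Definition in_y (K : fieldType) (p : {poly K}) : {poly {poly K}} := map_poly polyC p.

Definition conv_xy (K : fieldType) (p : nat -> {poly K}) (n : nat) : {poly {poly K}} :=
  \sum_(0 <= k < n.+1) in_x (p k) * in_y (p (n - k)%N).

(* K-linearity of F : K[x] -> K[x,y] (scalars act as constants). *)
Definition Klinear_xy (K : fieldType) (F : {poly K} -> {poly {poly K}}) : Prop :=
  forall (a : K) (p q : {poly K}), F (a *: p + q) = (a%:P)%:P * F p + F q.

Definition Klinear_form (K : fieldType) (e : {poly K} -> K) : Prop :=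
  forall (a : K) (p q : {poly K}), e (a *: p + q) = a * e p + e q.

(* Main.v *)
Require Import Defs.
Local Open Scope ring_scope.

Section Aux.
Variable K : fieldType.

Lemma sum_widen (V : zmodType) (s N : nat) (f : nat -> V) :
  (s <= N)%N -> (forall i, (s <= i)%N -> f i = 0) ->
  \sum_(i < N) f i = \sum_(i < s) f i.
Proof.
move=> sN f0.
rewrite -!(big_mkord xpredT f) (big_cat_nat (leq0n s) sN) /=.
rewrite [X in _ + X]big1_seq ?addr0 // => i /andP[_].
by rewrite mem_index_iota => /andP[h _]; exact: f0.
Qed.

Variable e : {poly K} -> K.
Hypothesis e_lin : Klinear_form e.

Lemma e0 : e 0 = 0.
Proof.
have := e_lin 1 0 0; rewrite scale1r !addr0 mul1r => h.
by apply: (addrI (e 0)); rewrite addr0 -h.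
Qed.

Lemma eD x y : e (x + y) = e x + e y.
Proof. by have := e_lin 1 x y; rewrite scale1r mul1r. Qed.

Lemma eZ c x : e (c *: x) = c * e x.
Proof. by have := e_lin c x 0; rewrite !addr0 e0 addr0. Qed.

Lemma e_sum N (f : nat -> {poly K}) : e (\sum_(i < N) f i) = \sum_(i < N) e (f i).
Proof.
elim: N => [|N IH]; first by rewrite !big_ord0 e0.
by rewrite !big_ord_recr /= eD IH.
Qed.

Lemma e_expand (b : {poly K}) N : (size b <= N)%N ->
  \sum_(i < N) b`_i * e 'X^i = e b.
Proof.
move=> sb.
rewrite (@sum_widen _ _ _ (fun i => b`_i * e 'X^i) sb); last first.
  by move=> i hi; rewrite nth_default ?mul0r.
have -> : e b = e (\poly_(i < size b) b`_i) by rewrite coefK.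
rewrite poly_def (e_sum _ (fun i => b`_i *: 'X^i)); apply: eq_bigr => i _; by rewrite eZ.
Qed.

Lemma p_expand (b : {poly K}) N : (size b <= N)%N ->
  \sum_(i < N) b`_i *: 'X^i = b.
Proof.
move=> sb.
rewrite (@sum_widen _ _ _ (fun i => b`_i *: 'X^i) sb); last first.
  by move=> i hi; rewrite nth_default ?scale0r.
by rewrite -poly_def coefK.
Qed.

Definition PhiN N (P : {poly {poly K}}) : {poly K} := \sum_(i < N) e 'X^i *: P`_i.
Definition PsiN N (P : {poly {poly K}}) : {poly K} := \sum_(i < N) e (P`_i) *: 'X^i.
Definition Phi (P : {poly {poly K}}) := PhiN (size P) P.
Definition Psi (P : {poly {poly K}}) := PsiN (size P) P.

Lemma PhiNE N (P : {poly {poly K}}) : (size P <= N)%N -> PhiN N P = Phi P.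
Proof.
move=> sP; rewrite /Phi /PhiN (@sum_widen _ _ _ (fun i => e 'X^i *: P`_i) sP) //.
by move=> i hi; rewrite nth_default ?scaler0.
Qed.

Lemma PsiNE N (P : {poly {poly K}}) : (size P <= N)%N -> PsiN N P = Psi P.
Proof.
move=> sP; rewrite /Psi /PsiN (@sum_widen _ _ _ (fun i => e P`_i *: 'X^i) sP) //.
by move=> i hi; rewrite nth_default ?e0 ?scale0r.
Qed.

Lemma PhiN_lin N c (P Q : {poly {poly K}}) : PhiN N ((c%:P)%:P * P + Q) = c *: PhiN N P + PhiN N Q.
Proof.
rewrite /PhiN scaler_sumr -big_split; apply: eq_bigr => i _ /=.
by rewrite coefD coefCM mul_polyC scalerDr !scalerA mulrC.
Qed.

Lemma PsiN_lin N c (P Q : {poly {poly K}}) : PsiN N ((c%:P)%:P * P + Q) = c *: PsiN N P + PsiN N Q.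
Proof.
rewrite /PsiN scaler_sumr -big_split; apply: eq_bigr => i _ /=.
by rewrite coefD coefCM mul_polyC e_lin scalerDl scalerA.
Qed.

Lemma PhiN_sum N m (f : nat -> {poly {poly K}}) :
  PhiN N (\sum_(0 <= k < m) f k) = \sum_(0 <= k < m) PhiN N (f k).
Proof.
rewrite /PhiN exchange_big /=; apply: eq_bigr => i _.
by rewrite coef_sum scaler_sumr.
Qed.

Lemma PsiN_sum N m (f : nat -> {poly {poly K}}) :
  PsiN N (\sum_(0 <= k < m) f k) = \sum_(0 <= k < m) PsiN N (f k).
Proof.
rewrite /PsiN exchange_big /=; apply: eq_bigr => i _.
rewrite coef_sum.
elim: m => [|m IH]; first by rewrite !big_nil e0 scale0r.
by rewrite !big_nat_recr //= eD scalerDl IH.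
Qed.

Lemma coef_xy (a b : {poly K}) i : (in_x a * in_y b)`_i = b`_i *: a.
Proof.
by rewrite /in_x /in_y coefCM coef_map /= mulrC mul_polyC.
Qed.

Lemma PhiN_xy N (a b : {poly K}) : (size b <= N)%N -> PhiN N (in_x a * in_y b) = e b *: a.
Proof.
move=> sb; rewrite /PhiN.
under eq_bigr do rewrite coef_xy scalerA.
by rewrite -scaler_suml -(@e_expand b N sb); congr (_ *: _); apply: eq_bigr => i _; rewrite mulrC.
Qed.

Lemma PsiN_xy N (a b : {poly K}) : (size b <= N)%N -> PsiN N (in_x a * in_y b) = e a *: b.
Proof.
move=> sb; rewrite /PsiN.
under eq_bigr do rewrite coef_xy eZ mulrC -scalerA.
by rewrite -scaler_sumr p_expand.
Qed.

Lemma ident (G : {poly K} -> {poly K}) (p : nat -> {poly K}) :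
  (forall n, size (p n) = n.+1) ->
  (forall c q r, G (c *: q + r) = c *: G q + G r) ->
  (forall n, G (p n) = p n) -> forall q, G q = q.
Proof.
move=> ps Gl Gp.
have G0 : G 0 = 0.
  have := Gl 1 0 0; rewrite !scale1r !addr0 => h.
  by apply: (addrI (G 0)); rewrite addr0 -h.
suff H : forall n (q : {poly K}), (size q <= n)%N -> G q = q by move=> q; exact: (H (size q) q (leqnn _)).
elim=> [|n IH] q sq.
  by move: sq; rewrite leqn0 size_poly_eq0 => /eqP ->.
have lc : lead_coef (p n) != 0 by rewrite lead_coef_eq0 -size_poly_eq0 ps.
set c := q`_n / lead_coef (p n).
have sr : (size (q - c *: p n)%R <= n)%N.
  apply/leq_sizeP => j; rewrite leq_eqVlt => /orP[/eqP <-|hj].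
    rewrite coefB coefZ /c; have -> : (p n)`_n = lead_coef (p n) by rewrite lead_coefE ps.
    by rewrite mulfVK // subrr.
  have h1 : q`_j = 0 by apply: nth_default; exact: leq_trans sq hj.
  have h2 : (p n)`_j = 0 by apply: nth_default; rewrite ps.
  by rewrite coefB coefZ h1 h2 mulr0 subrr.
have -> : q = c *: p n + (q - c *: p n) by rewrite addrC subrK.
by rewrite Gl Gp IH.
Qed.

End Aux.

Theorem corollary1 (K : fieldType) (Kchar0 : [pchar K] =i pred0)
  (F : {poly K} -> {poly {poly K}}) (F_lin : Klinear_xy F)
  (p p' : nat -> {poly K})
  (p_deg : forall n, size (p n) = n.+1) (p'_deg : forall n, size (p' n) = n.+1)
  (Fp : forall n, F (p n) = conv_xy p n) (Fp' : forall n, F (p' n) = conv_xy p' n)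
  (eps eps' : {poly K} -> K) (eps_lin : Klinear_form eps) (eps'_lin : Klinear_form eps')
  (eps_p : forall n, eps (p n) = (n == 0%N)%:R)
  (eps'_p' : forall n, eps' (p' n) = (n == 0%N)%:R) :
  forall q : {poly K}, eps q = eps' q.
Proof.
have Phi_id : forall q, Phi K eps' (F q) = q.
  apply: (@ident K _ _ p'_deg).
    move=> c q r.
    set N := maxn (size (F (c *: q + r))) (maxn (size (F q)) (size (F r))).
    rewrite -(@PhiNE K eps' _ _ (leq_maxl _ _ : (size (F (c *: q + r)%R) <= N)%N)).
    rewrite -(@PhiNE K eps' _ _ (leq_trans (leq_maxl _ _) (leq_maxr _ _) : (size (F q) <= N)%N)).
    rewrite -(@PhiNE K eps' _ _ (leq_trans (leq_maxr _ _) (leq_maxr _ _) : (size (F r) <= N)%N)).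
    by rewrite F_lin PhiN_lin.
  move=> n.
  set N := maxn (size (F (p' n))) n.+1.
  rewrite -(@PhiNE K eps' _ _ (leq_maxl _ _ : (size (F (p' n)) <= N)%N)).
  rewrite Fp' /conv_xy PhiN_sum.
  rewrite (eq_big_nat _ _ (F2 := fun k => ((n - k)%N == 0%N)%:R *: p' k)); last first.
    move=> k /andP[_ hk]; rewrite (@PhiN_xy K eps' eps'_lin) ?eps'_p' //.
    by rewrite p'_deg (leq_trans _ (leq_maxr _ _)) // ltnS leq_subr.
  rewrite big_nat_recr //= subnn scale1r big1_seq ?add0r // => k /andP[_].
  rewrite mem_index_iota => /andP[_ hk].
  by rewrite subn_eq0 leqNgt hk scale0r.
have Psi_id : forall q, Psi K eps (F q) = q.
  apply: (@ident K _ _ p_deg).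
    move=> c q r.
    set N := maxn (size (F (c *: q + r))) (maxn (size (F q)) (size (F r))).
    rewrite -(@PsiNE K eps eps_lin _ _ (leq_maxl _ _ : (size (F (c *: q + r)%R) <= N)%N)).
    rewrite -(@PsiNE K eps eps_lin _ _ (leq_trans (leq_maxl _ _) (leq_maxr _ _) : (size (F q) <= N)%N)).
    rewrite -(@PsiNE K eps eps_lin _ _ (leq_trans (leq_maxr _ _) (leq_maxr _ _) : (size (F r) <= N)%N)).
    by rewrite F_lin (@PsiN_lin K eps eps_lin).
  move=> n.
  set N := maxn (size (F (p n))) n.+1.
  rewrite -(@PsiNE K eps eps_lin _ _ (leq_maxl _ _ : (size (F (p n)) <= N)%N)).
  rewrite Fp /conv_xy (@PsiN_sum K eps eps_lin).
  rewrite (eq_big_nat _ _ (F2 := fun k => (k == 0%N)%:R *: p (n - k)%N)); last first.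
    move=> k /andP[_ hk]; rewrite (@PsiN_xy K eps eps_lin) ?eps_p //.
    by rewrite p_deg (leq_trans _ (leq_maxr _ _)) // ltnS leq_subr.
  rewrite big_nat_recl //= subn0 scale1r big1_seq ?addr0 // => k _.
  by rewrite scale0r.
move=> q.
rewrite -{1}(Phi_id q) -{2}(Psi_id q) /Phi /Psi /PhiN /PsiN.
rewrite (@e_sum K eps eps_lin _ (fun i => eps' 'X^i *: (F q)`_i)) (@e_sum K eps' eps'_lin _ (fun i => eps (F q)`_i *: 'X^i)).
apply: eq_bigr => i _.
by rewrite (@eZ K eps eps_lin) (@eZ K eps' eps'_lin) mulrC.
Qed.
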